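(* Let $\mathbf z_1,\dots,\mathbf z_d\in\mathbb Z^d$ be a basis of $\mathbb Z^d$ with $|\underline{\mathbf z_1}|\leq|\underline{\mathbf z_2}|\leq|\underline{\mathbf z_3}|$. Then for each $\boldsymbol\alpha\in\mathfrak S_2$ we have $\langle\boldsymbol\alpha,\mathbf z_1\rangle\cdot\langle\boldsymbol\alpha_2,\mathbf z_1\rangle>0$.
   Context: Let $d\geq3$. $|\cdot|$ is the Euclidean norm, $\langle\cdot,\cdot\rangle$ the standard inner product. For $\mathbf x=(x_1,\dots,x_d)\in\mathbb R^d$ write $\underline{\mathbf x}=(x_1,\dots,x_{d-1})$. Let $\pi_d=\{\mathbf x\in\mathbb R^d:x_d=1\}$. For given vectors $\mathbf z_1,\mathbf z_2,\dots$: $\det\underline\Lambda_{k,l}=|\underline{\mathbf z_k}\wedge\dots\wedge\underline{\mathbf z_{k+l-1}}|$; $R_k=1/(2|\underline{\mathbf z_{k+1}}|\det\underline\Lambda_{k,d-1})$; when $\underline{\mathbf z_k},\dots,\underline{\mathbf z_{k+d-2}}$ are linearly independent, $\boldsymbol\alpha_k$ is the unique point of $\pi_d$ orthogonal to $\mathbf z_k,\dots,\mathbf z_{k+d-2}$ and $\mathfrak S_k=\{\mathbf x\in\pi_d:|\mathbf x-\boldsymbol\alpha_k|\le R_k\}$; whenever $\boldsymbol\alpha_k$ or $\mathfrak S_k$ appears it is implicitly assumed well defined. *)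

(* Defs.v *)
(* Ambient dimension d = n.+1 (so d >= 3 iff 2 <= n). *)
From mathcomp Require Import all_boot all_order all_algebra.
From mathcomp Require Import reals.
Set Implicit Arguments. Unset Strict Implicit. Unset Printing Implicit Defensive.
Import Order.TTheory GRing.Theory Num.Theory.
Local Open Scope ring_scope.

Section Defs.
Variable R : realType.

Definition inner (m : nat) (x y : 'rV[R]_m) : R := (x *m y^T) 0 0.
Definition enorm (m : nat) (x : 'rV[R]_m) : R := Num.sqrt (inner x x).

(* underline: drop the last coordinate, R^(n+1) -> R^n *)
Definition ul (n : nat) (x : 'rV[R]_n.+1) : 'rV[R]_n :=
  \row_(j < n) x 0 (widen_ord (leqnSn n) j).

Definition wedge_norm (m l : nat) (u : 'I_l -> 'rV[R]_m) : R :=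
  Num.sqrt (\det (\matrix_(i < l, j < l) inner (u i) (u j))).

Definition zR (m : nat) (v : 'rV[int]_m) : 'rV[R]_m := map_mx (fun a : int => a%:~R) v.

(* the vectors are indexed z 1, ..., z d as in the paper (z : nat -> Z^d) *)
Definition detLam (n : nat) (z : nat -> 'rV[int]_n.+1) (k l : nat) : R :=
  wedge_norm (fun i : 'I_l => ul (zR (z (k + i)%N))).

Definition Rk (n : nat) (z : nat -> 'rV[int]_n.+1) (k : nat) : R :=
  1 / (2 * enorm (ul (zR (z k.+1))) * detLam z k n).

Definition ul_indep (n : nat) (z : nat -> 'rV[int]_n.+1) (k : nat) : Prop :=
  row_free (\matrix_(i < n) ul (zR (z (k + i)%N))).

Definition in_pi (n : nat) (x : 'rV[R]_n.+1) : Prop := x 0 ord_max = 1.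

(* a is alpha_k : the (unique, under ul_indep) point of pi_d orthogonal to
   z_k, ..., z_(k+d-2) *)
Definition is_alpha (n : nat) (z : nat -> 'rV[int]_n.+1) (k : nat) (a : 'rV[R]_n.+1) : Prop :=
  in_pi a /\ forall i : 'I_n, inner a (zR (z (k + i)%N)) = 0.

Definition in_S (n : nat) (z : nat -> 'rV[int]_n.+1) (k : nat) (a x : 'rV[R]_n.+1) : Prop :=
  in_pi x /\ enorm (x - a) <= Rk z k.
End Defs.

Definition is_Zbasis (d : nat) (z : nat -> 'rV[int]_d) : Prop :=
  forall v : 'rV[int]_d, exists! c : 'rV[int]_d, v = \sum_(i < d) c 0 i *: z i.+1.

(* Main.v *)
Require Import Defs.
From mathcomp Require Import all_boot all_order all_algebra.
From mathcomp Require Import reals.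
From mathcomp Require Import ring lra.
Import Order.TTheory GRing.Theory Num.Theory.
Local Open Scope ring_scope.

Set Implicit Arguments. Unset Strict Implicit.
Section H.
Variable R : realType.

Lemma inner_sum m (x y : 'rV[R]_m) : inner x y = \sum_k x 0 k * y 0 k.
Proof. by rewrite /inner mxE; apply: eq_bigr => k _; rewrite mxE. Qed.

Lemma inner_split n (x y : 'rV[R]_n.+1) :
  inner x y = inner (ul x) (ul y) + x 0 ord_max * y 0 ord_max.
Proof.
rewrite !inner_sum big_ord_recr /=; congr (_ + _).
by apply: eq_bigr => k _; rewrite !mxE.
Qed.

Lemma inner_ge0 m (x : 'rV[R]_m) : 0 <= inner x x.
Proof. by rewrite inner_sum; apply: sumr_ge0 => k _; rewrite -expr2 sqr_ge0. Qed.

Lemma CS_sum m (f g : 'I_m -> R) :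
  (\sum_k f k * g k) ^+ 2 <= (\sum_k f k ^+ 2) * (\sum_k g k ^+ 2).
Proof.
set a := \sum_k g k ^+ 2; set b := \sum_k f k * g k; set s := \sum_k f k ^+ 2.
have a0 : 0 <= a by apply: sumr_ge0 => k _; rewrite sqr_ge0.
have key : 0 <= a * (a * s - b ^+ 2).
  have -> : a * (a * s - b ^+ 2) = \sum_k (a * f k - b * g k) ^+ 2.
    rewrite (eq_bigr (fun k => a ^+ 2 * f k ^+ 2 - (2 * a * b) * (f k * g k) + b ^+ 2 * g k ^+ 2)); last first.
      by move=> k _; rewrite sqrrB; ring.
    rewrite big_split big_split /= sumrN -!mulr_sumr -/a -/b -/s; ring.
  by apply: sumr_ge0 => k _; rewrite sqr_ge0.
case: (ltrgt0P a) => [apos|aneg|a0'].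
- by rewrite -subr_ge0 mulrC; move: key; rewrite pmulr_rge0.
- by move: a0; rewrite leNgt aneg.
- have g0 : forall k, g k = 0.
    move=> k; have := a0'; rewrite /a => /eqP; rewrite psumr_eq0 => [/allP H|k' _]; last by rewrite sqr_ge0.
    by apply/eqP; rewrite -sqrf_eq0; apply: (implyP (H k (mem_index_enum _))).
  have -> : b = 0 by rewrite /b big1 // => k _; rewrite g0 mulr0.
  by rewrite expr0n /= mulr_ge0 // sumr_ge0 // => k _; rewrite sqr_ge0.
Qed.

Lemma CS m (x y : 'rV[R]_m) : `|inner x y| <= enorm x * enorm y.
Proof.
rewrite /enorm -sqrtrM ?inner_ge0 // -sqrtr_sqr ler_sqrt ?mulr_ge0 ?inner_ge0 //.
by rewrite !inner_sum; exact: CS_sum.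
Qed.

Definition Nm n (z : nat -> 'rV[int]_n.+1) : 'M[R]_n :=
  \matrix_(i < n) ul (zR R (z (2 + i)%N)).
Definition Mm n (z : nat -> 'rV[int]_n.+1) : 'M[R]_n.+1 :=
  \matrix_(i < n.+1) zR R (z i.+1).

Lemma detLam_eq n (z : nat -> 'rV[int]_n.+1) : detLam R z 2 n = `|\det (Nm z)|.
Proof.
rewrite /detLam /wedge_norm -sqrtr_sqr; congr Num.sqrt.
rewrite expr2 -[X in _ * X]det_tr -det_mulmx; congr (\det _).
apply/matrixP => i j; rewrite !mxE inner_sum; apply: eq_bigr => k _.
by rewrite !mxE.
Qed.

Lemma det_Mm n (z : nat -> 'rV[int]_n.+1) a : is_alpha z 2 a ->
  \det (Mm z) = inner a (zR R (z 1%N)) * ((-1) ^+ n * \det (Nm z)).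
Proof.
move=> [api aort].
pose E : 'M[R]_n.+1 := \matrix_(i, j) if j == ord_max then a 0 i else (i == j)%:R.
have dE : \det E = 1.
  rewrite -det_tr det_trig; last first.
    apply/is_trig_mxP => i j ij; rewrite !mxE.
    case: eqP => [ei|_]; last by move: ij; case: eqP => [->|]; rewrite ?ltnn.
    idtac.
    by move: (ltn_ord j); rewrite -ltnS; move: ij; rewrite ei /= => /leq_trans H /H; rewrite ltnn.
  rewrite (bigD1 ord_max) //= big1 ?mulr1; first by rewrite !mxE eqxx.
  by move=> i /negPf ni; rewrite !mxE ni eqxx.
have -> : \det (Mm z) = \det (Mm z *m E) by rewrite det_mulmx dE mulr1.
rewrite (expand_det_col _ ord_max) (bigD1 ord0) //= big1 ?addr0; last first.
  move=> i i0; rewrite !mxE.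
  have -> : \sum_j Mm z i j * E j ord_max = inner a (zR R (z i.+1)).
    by rewrite inner_sum; apply: eq_bigr => k _; rewrite !mxE eqxx mulrC.
  case: i i0 => [[|i] ip] //= _.
  have ip' : (i < n)%N by [].
  by have := aort (Ordinal ip'); rewrite /= add2n => ->; rewrite mul0r.
rewrite !mxE; congr (_ * _).
  by rewrite inner_sum; apply: eq_bigr => k _; rewrite !mxE eqxx mulrC.
rewrite /cofactor /= add0n; congr (_ * _); congr (\det _).
apply/matrixP => i j; rewrite !mxE.
have hl : (lift ord_max j == ord_max) = false by rewrite eq_sym; apply: negPf; apply: neq_lift.
rewrite (bigD1 (lift ord_max j)) //= big1 ?addr0; last first.
  by move=> k /negPf kn; rewrite /E !mxE hl kn mulr0.
rewrite /E !mxE hl eqxx mulr1.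
have -> : widen_ord (leqnSn n) j = lift ord_max j by apply: val_inj; rewrite /= /bump leqNgt ltn_ord.
by rewrite /= add2n.
Qed.

Lemma det_Mm1 n (z : nat -> 'rV[int]_n.+1) : is_Zbasis z -> `|\det (Mm z)| = 1.
Proof.
move=> zb.
pose Mz : 'M[int]_n.+1 := \matrix_(i < n.+1) z i.+1.
have -> : Mm z = map_mx intr Mz by apply/matrixP => i j; rewrite !mxE.
rewrite det_map_mx.
have [c hc] : exists c : 'I_n.+1 -> 'rV[int]_n.+1,
    forall j, delta_mx 0 j = \sum_(i < n.+1) c j 0 i *: z i.+1.
  have H : forall j : 'I_n.+1, exists c : 'rV[int]_n.+1,
      delta_mx 0 j = \sum_(i < n.+1) c 0 i *: z i.+1.
    by move=> j; have [c [hc _]] := zb (delta_mx 0 j); exists c.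
  exact: fin_all_exists H.
pose C : 'M[int]_n.+1 := \matrix_(j < n.+1) c j.
have CM : C *m Mz = 1.
  apply/matrixP => j k; rewrite !mxE.
  have := congr1 (fun v : 'rV[int]_n.+1 => v 0 k) (hc j); rewrite /= mxE eqxx /= eq_sym => ->.
  rewrite summxE; apply: eq_bigr => i _; rewrite !mxE.
  done.
have : \det C * \det Mz = 1 by rewrite -det_mulmx CM det1.
move/intUnitRing.unitzPl; rewrite qualifE => /orP [] /eqP ->.
  by rewrite normr1.
by rewrite rmorphN rmorph1 normrN normr1.
Qed.
End H.

Theorem corollary1 (R : realType) (n : nat) (hn : (2 <= n)%N)
  (z : nat -> 'rV[int]_n.+1) :
  is_Zbasis z ->
  enorm (ul (zR R (z 1%N))) <= enorm (ul (zR R (z 2%N))) ->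
  enorm (ul (zR R (z 2%N))) <= enorm (ul (zR R (z 3%N))) ->
  ul_indep R z 2 ->
  forall alpha2 : 'rV[R]_n.+1, is_alpha z 2 alpha2 ->
  forall alpha : 'rV[R]_n.+1, in_S z 2 alpha2 alpha ->
  inner alpha (zR R (z 1%N)) * inner alpha2 (zR R (z 1%N)) > 0.
Proof.
move=> zb h12 h23 _ a2 ha2 a [api hS].
have [a2pi _] := ha2.
set c := inner a2 (zR R (z 1%N)).
set w := a - a2.
set e := inner w (zR R (z 1%N)).
have ce : inner a (zR R (z 1%N)) = c + e.
  rewrite /c /e /w !inner_sum -big_split /=; apply: eq_bigr => k _.
  by rewrite !mxE; ring.
set D := `|\det (Nm R z)|.
have cD : `|c| * D = 1.
  by rewrite /D -(det_Mm1 R zb) (det_Mm ha2) normrM normrM normrX normrN1 expr1n mul1r.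
have D0 : 0 <= D by rewrite normr_ge0.
have w0 : w 0 ord_max = 0 by rewrite /w !mxE api a2pi subrr.
have ew : enorm w = enorm (ul w) by rewrite /enorm inner_split w0 mulr0 addr0.
have he1 : `|e| <= enorm (ul w) * enorm (ul (zR R (z 1%N))).
  by rewrite /e inner_split w0 mul0r addr0; exact: CS.
set e1 := enorm (ul (zR R (z 1%N))) in h12 he1.
set e3 := enorm (ul (zR R (z 3%N))) in h23.
have e1ge : 0 <= e1 by rewrite /e1 /enorm sqrtr_ge0.
have e3ge : 0 <= e3 by rewrite /e3 /enorm sqrtr_ge0.
have uge : 0 <= enorm (ul w) by rewrite /enorm sqrtr_ge0.
have hR : enorm (ul w) <= 1 / (2 * e3 * D) by rewrite -ew /D -detLam_eq; exact: hS.
have he : `|e| <= `|c| / 2.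
  apply: (le_trans he1).
  apply: (le_trans (y := 1 / (2 * e3 * D) * e3)).
    apply: ler_pM => //; exact: le_trans h12 h23.
  have [e30|e3pos] := eqVneq e3 0; first by rewrite e30 mulr0 divr_ge0 ?normr_ge0.
  have Dpos : D != 0 by apply/eqP => D00; move: cD; rewrite D00 mulr0 => /eqP; rewrite eq_sym oner_eq0.
  have -> : `|c| = 1 / D by rewrite -cD mulfK.
  rewrite le_eqVlt; apply/orP; left; apply/eqP; field.
  by rewrite Dpos e3pos.
rewrite ce.
have cn : `|c| * `|c| = c * c by rewrite -!expr2 real_normK ?num_real.
have ce2 : - (`|c| * `|e|) <= c * e by rewrite -normrM lerNl -normrN ler_norm.
have cpos : 0 < `|c| by rewrite normr_gt0; apply/eqP => c0; move: cD; rewrite c0 normr0 mul0r => /eqP; rewrite eq_sym oner_eq0.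
have : `|c| * `|e| <= `|c| * (`|c| / 2) by rewrite ler_pM2l.
nra.
Qed.
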